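(* Let $(C,S)$ be a right-angled Coxeter system and $\rho\colon C\to\mathrm{SL}^{\pm}(|S|,\mathbb{R})$ a simplicial representation with fully nondegenerate Cartan matrix. For $T\subset S$ let $V_T=\mathrm{span}\{v_s:s\in T\}$ and $V_T^\perp=\bigcap_{s\in T}\ker(\alpha_s)$. Then $V=V_T\oplus V_T^\perp$ is a $C(T)$-invariant decomposition, and the representation $\rho_T\colon C(T)\to\mathrm{SL}^{\pm}(V_T)$ given by the restriction of $\rho|_{C(T)}$ to $V_T$ is isomorphic to a simplicial representation of $(C(T),T)$.
   Context: $S=\{s_1,\dots,s_n\}$, $V=\mathbb{R}^n$, $C(T)=\langle T\rangle$. A Cartan matrix is a real $n\times n$ matrix $A$ with $A_{ii}=2$; $A_{ij}=0$ if $s_i,s_j$ commute ($i\ne j$); $A_{ij}<0$ and $A_{ij}A_{ji}\ge4$ otherwise. With $\alpha_{s_i}=e^i$ (dual basis) and $v_{s_i}=\sum_kA_{ki}e_k$, the simplicial representation is $\rho(s_i)=\mathrm{id}-v_{s_i}\otimes\alpha_{s_i}$. A simplicial representation of $(C(T),T)$ is defined in the same way from a Cartan matrix of $(C(T),T)$. $A$ is fully nondegenerate if all its principal minors are nonzero. *)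

(* Defs.v *)
From HB Require Import structures.
From mathcomp Require Import all_boot all_order all_algebra.
Set Implicit Arguments. Unset Strict Implicit. Unset Printing Implicit Defensive.
Import Order.TTheory GRing.Theory Num.Theory.
Local Open Scope ring_scope.

(* A right-angled Coxeter system (C,S) with S = {s_0,...,s_{n-1}} is encoded by
   its commutation graph [G : rel 'I_n]: G i j holds iff s_i and s_j commute
   (i <> j, m_ij = 2); otherwise (i <> j) m_ij = infinity. *)
Definition rac_graph (n : nat) (G : rel 'I_n) : Prop :=
  (forall i, ~~ G i i) /\ (forall i j, G i j = G j i).

Definition is_cartan (R : realFieldType) (n : nat) (G : rel 'I_n) (A : 'M[R]_n) : Prop :=
  forall i j,
    (i = j -> A i j = 2) /\
    (i <> j -> G i j -> A i j = 0) /\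
    (i <> j -> ~~ G i j -> A i j < 0 /\ 4 <= A i j * A j i).

(* Principal submatrix of A on the index set I (indices listed increasingly). *)
Definition principal_submx (R : realFieldType) (n : nat) (A : 'M[R]_n) (I : {set 'I_n})
  : 'M[R]_#|I| :=
  \matrix_(a < #|I|, b < #|I|) A (enum_val a) (enum_val b).

Definition fully_nondegenerate (R : realFieldType) (n : nat) (A : 'M[R]_n) : Prop :=
  forall I : {set 'I_n}, \det (principal_submx A I) != 0.

Definition induced_graph (n : nat) (G : rel 'I_n) (T : {set 'I_n}) : rel 'I_#|T| :=
  fun a b => G (enum_val a) (enum_val b).

(* Simplicial representation: acting on column vectors of R^n,
   rho(s_i) = id - v_{s_i} (x) alpha_{s_i}, with alpha_{s_i} = e^i and
   v_{s_i} = sum_k A_ki e_k = i-th column of A. *)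
Definition simp_rep (R : realFieldType) (n : nat) (A : 'M[R]_n) (i : 'I_n) : 'M[R]_n :=
  1%:M - col i A *m row i 1%:M.

Definition vs (R : realFieldType) (n : nat) (A : 'M[R]_n) (i : 'I_n) : 'cV[R]_n := col i A.

Definition in_VT (R : realFieldType) (n : nat) (A : 'M[R]_n) (T : {set 'I_n}) (x : 'cV[R]_n)
  : Prop :=
  exists c : 'I_n -> R, x = \sum_(i in T) c i *: vs A i.

Definition in_VTperp (R : realFieldType) (n : nat) (T : {set 'I_n}) (x : 'cV[R]_n) : Prop :=
  forall i, i \in T -> x i 0 = 0.

(* The a-th element (in increasing order) of T, i.e. the generator of C(T)
   indexed by a : 'I_#|T|. *)
Definition tgen (n : nat) (T : {set 'I_n}) (a : 'I_#|T|) : 'I_n := enum_val a.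
Arguments induced_graph {n} G T.

(* Main.v *)
Require Import Defs.
From HB Require Import structures.
From mathcomp Require Import all_boot all_order all_algebra.
Import Order.TTheory GRing.Theory Num.Theory.
Set Implicit Arguments. Unset Strict Implicit.
Local Open Scope ring_scope.

Definition Pm (R : realFieldType) (n : nat) (A : 'M[R]_n) (T : {set 'I_n}) : 'M[R]_(n, #|T|) :=
  \matrix_(j, a) A j (enum_val a).

Lemma P_mul (R : realFieldType) (n : nat) (A : 'M[R]_n) (T : {set 'I_n}) (w : 'cV[R]_#|T|) :
  Pm A T *m w = \sum_(a < #|T|) w a 0 *: vs A (enum_val a).
Proof.
apply/matrixP => j z; rewrite !mxE summxE; apply: eq_bigr => a _.
by rewrite !mxE (ord1 z) mulrC.
Qed.

Lemma sumT (R : realFieldType) (n : nat) (A : 'M[R]_n) (T : {set 'I_n}) (c : 'I_n -> R) :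
  \sum_(i in T) c i *: vs A i = Pm A T *m \col_a c (enum_val a).
Proof. by rewrite big_enum_val P_mul; apply: eq_bigr => a _; rewrite mxE. Qed.

Lemma inVT_P (R : realFieldType) (n : nat) (A : 'M[R]_n) (T : {set 'I_n}) x :
  in_VT A T x <-> exists w, x = Pm A T *m w.
Proof.
split=> [[c ->]|[w ->]]; first by eexists; apply: sumT.
exists (fun i => \sum_(b | enum_val b == i) w b 0); rewrite sumT; congr (_ *m _).
apply/matrixP => a z; rewrite mxE (ord1 z).
by rewrite (big_pred1 a) // => b; rewrite /= (inj_eq enum_val_inj).
Qed.

Lemma P_entry (R : realFieldType) (n : nat) (A : 'M[R]_n) (T : {set 'I_n}) p (w : 'M[R]_(#|T|, p)) b j :
  (Pm A T *m w) (enum_val b) j = (principal_submx A T *m w) b j.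
Proof. by rewrite !mxE; apply: eq_bigr => a _; rewrite !mxE. Qed.

Lemma sr_mul (R : realFieldType) (n : nat) (A : 'M[R]_n) i (x : 'cV[R]_n) :
  simp_rep A i *m x = x - x i 0 *: vs A i.
Proof.
rewrite /simp_rep mulmxBl mul1mx -mulmxA -row_mul mul1mx.
rewrite [row i x]mx11_scalar mul_mx_scalar /vs !mxE; done.
Qed.

Lemma colP (R : realFieldType) (n : nat) (A : 'M[R]_n) (T : {set 'I_n}) a :
  Pm A T *m delta_mx a 0 = vs A (enum_val a).
Proof. by rewrite -colE; apply/matrixP => j z; rewrite !mxE. Qed.

Theorem lemma4p8 (R : realFieldType) (n : nat) (G : rel 'I_n) (A : 'M[R]_n)
    (T : {set 'I_n}) :
  rac_graph G -> is_cartan G A -> fully_nondegenerate A ->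
  (* V = V_T (+) V_T^perp *)
  ((forall x : 'cV[R]_n, exists y z, in_VT A T y /\ in_VTperp T z /\ x = y + z) /\
   (forall x : 'cV[R]_n, in_VT A T x -> in_VTperp T x -> x = 0)) /\
  (* the decomposition is C(T)-invariant (C(T) is generated by T) *)
  (forall i, i \in T -> forall x : 'cV[R]_n,
     (in_VT A T x -> in_VT A T (simp_rep A i *m x)) /\
     (in_VTperp T x -> in_VTperp T (simp_rep A i *m x))) /\
  (* rho_T is isomorphic to a simplicial representation of (C(T),T) *)
  (exists (A' : 'M[R]_#|T|) (psi : 'M[R]_(n, #|T|)),
     is_cartan (induced_graph G T) A' /\
     (forall y : 'cV[R]_#|T|, in_VT A T (psi *m y)) /\
     (forall y : 'cV[R]_#|T|, psi *m y = 0 -> y = 0) /\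
     (forall x : 'cV[R]_n, in_VT A T x -> exists y, x = psi *m y) /\
     (forall a : 'I_#|T|, simp_rep A (tgen a) *m psi = psi *m simp_rep A' a)).
Proof.
move=> [Girr Gsym] HC Hfn.
set B := principal_submx A T.
have Bu : B \in unitmx by rewrite unitmxE unitfE Hfn.
set P := Pm A T.
set psi := P *m invmx B.
have psiB : psi *m B = P by rewrite -mulmxA mulVmx // mulmx1.
have psiE : forall p (y : 'M[R]_(#|T|, p)) (a : 'I_#|T|) j, (psi *m y) (enum_val a) j = y a j.
  move=> p y a j; rewrite -mulmxA P_entry mulmxA mulmxV // mul1mx //.
have memT : forall i : 'I_n, i \in T -> exists a : 'I_#|T|, i = enum_val a.
  by move=> i Ti; exists (enum_rank_in Ti i); rewrite enum_rankK_in.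
split; [split|split].
- move=> x; set w : 'cV[R]_#|T| := \col_a x (enum_val a) 0.
  exists (psi *m w), (x - psi *m w); split; [|split].
  + by apply/inVT_P; exists (invmx B *m w); rewrite mulmxA.
  + move=> i /memT [a ->]; rewrite [LHS]mxE [X in _ + X]mxE psiE mxE subrr //.
  + by rewrite addrC subrK.
- move=> x /inVT_P [w ->] Hp.
  have Bw : B *m w = 0.
    apply/matrixP => a z; rewrite (ord1 z) -P_entry [RHS]mxE; apply: Hp; exact: enum_valP.
  by rewrite -(mul1mx w) -(mulVmx Bu) -mulmxA Bw !mulmx0.
- move=> i Ti x; split.
  + move/inVT_P => [w ->]; apply/inVT_P; have [a ->] := memT i Ti.
    exists (w - (P *m w) (enum_val a) 0 *: delta_mx a 0).
    by rewrite sr_mul mulmxBr -scalemxAr colP.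
  + move=> Hp j Tj; rewrite sr_mul !mxE (Hp i Ti) mul0r subr0; exact: Hp.
- exists B, psi; split; [|split; [|split; [|split]]].
  + move=> a b; have [H1 [H2 H3]] := HC (enum_val a) (enum_val b).
    rewrite /B /principal_submx /induced_graph !mxE; split; [|split].
    * by move=> ab; apply: H1; rewrite ab.
    * by move=> ab; apply: H2 => /enum_val_inj.
    * by move=> ab; apply: H3 => /enum_val_inj.
  + by move=> y; apply/inVT_P; exists (invmx B *m y); rewrite mulmxA.
  + move=> y H; apply/matrixP => a z; rewrite -psiE H !mxE //.
  + move=> x /inVT_P [w ->]; exists (B *m w); by rewrite mulmxA psiB.
  + move=> a; rewrite /simp_rep /tgen mulmxBl mul1mx mulmxBr mulmx1; congr (_ - _).
    rewrite -!mulmxA -row_mul mul1mx.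
    have -> : row (enum_val a) psi = row a 1%:M.
      apply/matrixP => z j; rewrite mxE [RHS]mxE; have := psiE _ 1%:M a j; rewrite mulmx1 => ->; by rewrite mxE.
    rewrite !mulmxA -[P *m _]/psi; congr (_ *m _).
    by rewrite [col a B]colE mulmxA psiB colP.
Qed.
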